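(* Let $t\geq 2$ be an integer, $m=4t+2$, $n=2^m+1$, $\delta_1=\frac{n}{5}$ and $\delta_2=2^{4t-1}+\frac{2^{4t}-1}{5}$. If $x$ is an odd integer with $\delta_2<x\leq n-1$ and $x\neq\delta_1$, then $x$ is not a coset leader modulo $n$.
   Context: For $n=2^m+1$ and an integer $x$, the 2-cyclotomic coset of $x$ modulo $n$ is $C_x=\{x\cdot 2^{j} \bmod n : j\geq 0\}\subseteq\{0,1,\dots,n-1\}$. For $0\leq x\leq n-1$, ''$x$ is a coset leader'' means that $x$ is the smallest element of $C_x$. *)

(* Defs.v *)
From mathcomp Require Import all_boot.

Definition in_coset (n x y : nat) : Prop := exists j : nat, y = (x * 2 ^ j) %% n.

Definition coset_leader (n x : nat) : Prop :=
  x < n /\ in_coset n x x /\ forall y, in_coset n x y -> x <= y.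

(* Main.v *)
Require Import Defs.
From mathcomp Require Import all_boot zify.

Lemma coset_step n x y k q r :
  0 < n -> in_coset n x y -> y * 2 ^ k = q * n + r -> r < n -> in_coset n x r.
Proof.
move=> n0 [j ->] Hy Hr; exists (j + k).
have -> : r = ((x * 2 ^ j) %% n * 2 ^ k) %% n by rewrite Hy modnMDl modn_small.
rewrite Hy -Hy modnMml expnD mulnA //.
Qed.

Lemma coset_neg n x y m :
  n = 2 ^ m + 1 -> in_coset n x y -> 0 < y < n -> in_coset n x (n - y).
Proof.
move=> Hn Hc Hy; apply: (@coset_step n x y m (y - 1) (n - y)) => //; try lia.
have : 2 ^ m = n - 1 by lia.
move=> ->; nia.
Qed.


Theorem lemma4p4 (t x : nat) :
  2 <= t ->
  let m := 4 * t + 2 in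
  let n := 2 ^ m + 1 in
  let delta1 := n %/ 5 in
  let delta2 := 2 ^ (4 * t - 1) + (2 ^ (4 * t) - 1) %/ 5 in
  odd x -> delta2 < x -> x <= n - 1 -> x <> delta1 ->
  ~ coset_leader n x.
Proof.
move=> t2 m n d1 d2 _ Hx2 Hxn Hx1 [_ [Hxx Hmin]].
set N := 16 ^ t.
have HN : 2 ^ (4 * t) = N by rewrite expnM.
have Hm : 2 ^ m = 4 * N by rewrite /m expnD HN mulnC.
have E4 : (4 * t - 1).+1 = 4 * t by lia.
have Hh : 2 ^ (4 * t - 1) * 2 = N by rewrite -expnSr E4.
have N5 : N %% 5 = 1 by rewrite /N -modnXm (_ : 16 %% 5 = 1) // exp1n.
have N3 : N %% 3 = 1 by rewrite /N -modnXm (_ : 16 %% 3 = 1) // exp1n.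
have N256 : 256 <= N by rewrite /N (_ : t = 2 + (t - 2)) ?expnD; [ have := expn_gt0 16 (t-2); nia | lia].
have Hn : n = 4 * N + 1 by rewrite /n Hm.
have Hd1 : d1 = n %/ 5 by [].
have Hd2 : d2 = 2 ^ (4 * t - 1) + (N - 1) %/ 5 by rewrite /d2 HN.
have n0 : 0 < n by lia.
have Hneg : forall y, in_coset n x y -> 0 < y < n -> in_coset n x (n - y).
  by move=> y; apply: coset_neg.
have Hst : forall y k q r, in_coset n x y -> y * 2 ^ k = q * n + r -> r < n -> in_coset n x r.
  by move=> y k q r; apply: coset_step.
clearbody n d1 d2.
have x0 : 0 < x by lia.
case: (ltnP n (2 * x)) => c1.
  have := Hmin _ (Hneg _ Hxx ltac:(lia)); lia.
case: (ltnP n (3 * x)) => c2.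
  have H2 : in_coset n x (2 * x) by apply: (Hst x 1 0) => //; lia.
  have := Hmin _ (Hneg _ H2 ltac:(lia)); lia.
case: (ltnP n (4 * x)) => c3.
  have H4 : in_coset n x (4 * x - n) by apply: (Hst x 2 1) => //=; lia.
  have := Hmin _ H4; lia.
case: (ltnP n (5 * x)) => c4.
  have H4 : in_coset n x (4 * x) by apply: (Hst x 2 0) => //; lia.
  have := Hmin _ (Hneg _ H4 ltac:(lia)); lia.
have x5 : 5 * x < n by lia.
have x40 : 7 * n < 40 * x by lia.
have n4 : n %% 2 = 1 by lia.
clear Hx2 Hx1 c1 c2 c3 Hd1 Hd2 N5 N3 N256 Hh E4 HN.
have modE : forall a q r, a = q * n + r -> r < n -> a %% n = r.
  by move=> a q r -> Hr; rewrite modnMDl modn_small.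
have key : forall k, exists z, ((x * 2 ^ k) %% n = z \/ (x * 2 ^ k) %% n = n - z) /\ 2 * z < n /\
   ((k %% 4 = 0 /\ 7 * n < 40 * z /\ 5 * z < n) \/ (k %% 4 = 1 /\ 7 * n < 20 * z /\ 5 * z < 2 * n) \/
    (k %% 4 = 2 /\ n < 5 * z /\ 10 * z < 3 * n) \/ (k %% 4 = 3 /\ 2 * n < 5 * z)).
  elim=> [|k [z [Hv [Hz Hc]]]].
    exists x; split; first by left; rewrite expn0 muln1 modn_small //; lia.
    split; [lia | left; lia].
  have Hv' : (x * 2 ^ k.+1) %% n = ((x * 2 ^ k) %% n * 2) %% n by rewrite expnSr mulnA modnMml.
  have Hw : exists w, ((x * 2 ^ k.+1) %% n = w \/ (x * 2 ^ k.+1) %% n = n - w) /\ 0 < w /\ 2 * w < n /\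
      ((4 * z < n /\ w = 2 * z) \/ (n < 4 * z /\ w = n - 2 * z)).
    case: (ltnP (4 * z) n) => c.
      exists (2 * z); split; last lia.
      case: Hv => Hv; rewrite Hv' Hv.
        left; apply: (modE _ 0); lia.
      right; apply: (modE _ 1); lia.
    exists (n - 2 * z); split; last lia.
    case: Hv => Hv; rewrite Hv' Hv.
      right; apply: (modE _ 0); lia.
    left; apply: (modE _ 1); lia.
  case: Hw => w [Hw1 [Hw0 [Hw2 Hw3]]].
  have Hxw : x <= w.
    case: Hw1 => Hw1.
      by apply: Hmin; exists k.+1.
    have Hc' : in_coset n x (x * 2 ^ k.+1 %% n) by exists k.+1.
    have Hr : 0 < x * 2 ^ k.+1 %% n < n.
      rewrite Hw1; clear -Hw0 Hw2; lia.
    have := Hneg _ Hc' Hr.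
    rewrite Hw1 (_ : n - (n - w) = w); last by clear -Hw0 Hw2; lia.
    by apply: Hmin.
  exists w; split => //; split => //.
  have E : k.+1 %% 4 = (k %% 4).+1 %% 4 by clear; lia.
  rewrite E; clear Hv Hv' Hw1 E Hst Hneg Hmin modE.
  case: Hw3 => [[c5 Ew]|[c5 Ew]]; subst w; case: Hc => [[-> Hc]|[[-> Hc]|[[-> Hc]|[-> Hc]]]]; lia.
have [z [Hv [Hz Hc]]] := key m.
have Hm2 : x * 2 ^ m = x * (4 * N) by rewrite Hm.
have E2 : x * 2 ^ m = (x - 1) * n + (n - x).
  rewrite Hm2; clear -Hn x0 x5; subst n; nia.
have Hm' := modE _ _ _ E2 ltac:(lia).
have Em : m %% 4 = 2 by rewrite /m; lia.
clear -Hv Hz Hc Hm' Em x5 x0.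
case: Hc => [[Hc _]|[[Hc _]|[[_ Hc]|[Hc _]]]]; try lia.
Qed.
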